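(* Let $(G,M,I)$ be a finite total formal context and let $\mathcal S$ be its Dowker sheaf on $D(G,M,I)$. Then the zeroth cellular sheaf cohomology of $\mathcal S$ decomposes as $$H^0(\mathcal S)\cong\bigoplus_{\sigma\in D(G,M,I)}\operatorname{span}\widehat{M_\sigma},$$ so in particular $\dim H^0(\mathcal S)=|M|$, and $H^k(\mathcal S)=0$ for all $k>0$.
   Context: A formal context is a triple $(G,M,I)$ with $I\subseteq G\times M$; write $gIm$ for $(g,m)\in I$; for $A\subseteq G$, $A'=\{m: gIm\ \forall g\in A\}$, for $B\subseteq M$, $B'=\{g: gIm\ \forall m\in B\}$, $m'=\{m\}'$. It is total if $g'\ne\emptyset$ for all $g\in G$ and $m'\neq\emptyset$ for all $m\in M$. The Dowker complex $D(G,M,I)$ is the abstract simplicial complex on $G$ whose simplices are the nonempty $\sigma\subseteq G$ with $\sigma'\ne\emptyset$. For a simplex $\sigma$, $\widehat{M_\sigma}=\{m\in M: gIm \text{ iff } g\in\sigma\}=\{m: m'=\sigma\}$. The Dowker sheaf $\mathcal S$ assigns to each simplex $\sigma$ the real vector space $\mathcal S(\sigma)$ with basis $\sigma'$, and for $\sigma\subseteq\tau$ the restriction $\mathcal S(\sigma\subseteq\tau):\mathcal S(\sigma)\to\mathcal S(\tau)$ is the projection sending a basis element $m$ to $m$ if $m\in\tau'$ and to $0$ otherwise. Fix a linear order on $G$; for a $k$-simplex $\tau=\{g_0<\dots<g_k\}$ let $\tau_i=\tau\setminus\{g_i\}$. Cellular sheaf cohomology is the cohomology of the cochain complex $C^k=\bigoplus_{\dim\sigma=k}\mathcal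 S(\sigma)$ with $(d^k\delta)(\tau)=\sum_{i=0}^{k+1}(-1)^i\,\mathcal S(\tau_i\subseteq\tau)(\delta(\tau_i))$ for $(k+1)$-simplices $\tau$. *)

(* Defs.v *)
From HB Require Import structures.
From mathcomp Require Import all_boot all_order all_algebra.
Set Implicit Arguments. Unset Strict Implicit. Unset Printing Implicit Defensive.
Import Order.TTheory GRing.Theory Num.Theory.
Local Open Scope ring_scope.

Section Dowker.
Variables (R : fieldType) (G M : finType) (I : G -> M -> bool).

Definition total_context : Prop :=
  (forall g : G, exists m : M, I g m) /\ (forall m : M, exists g : G, I g m).

Definition intentS (A : {set G}) : {set M} := [set m | [forall g in A, I g m]].
Definition extent (m : M) : {set G} := [set g | I g m].

Definition simplex (s : {set G}) : bool := (s != set0) && (intentS s != set0).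

Definition Mhat (s : {set G}) : {set M} := [set m | extent m == s].

(* Basis of C^k = (+)_{dim s = k} S(s): pairs (s, m), s a k-simplex, m in s'. *)
Definition cell := ({set G} * M)%type.
Definition cidx (k : nat) (p : cell) : bool :=
  [&& simplex p.1, #|p.1| == k.+1 & p.2 \in intentS p.1].

Notation cochains := {ffun cell -> R^o}.

Definition Cvs (k : nat) : {vspace cochains} :=
  <<[seq ([ffun q : cell => ((q == p)%:R : R^o)] : cochains) | p <- enum (cidx k)]>>%VS.

Definition opos (t : {set G}) (g : G) : nat :=
  #|[set h in t | (enum_rank h < enum_rank g)%N]|.

(* coboundary d^k : C^k -> C^(k+1), with the restriction maps being projections *)
Definition dfun (k : nat) (f : cochains) : cochains :=
  [ffun p : cell => (if cidx k.+1 p then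
     \sum_(g in p.1) (-1) ^+ (opos p.1 g) * f (p.1 :\ g, p.2) else 0 : R^o)].

Lemma dfun_is_linear k : linear (dfun k).
Proof.
move=> a f h; apply/ffunP => p; rewrite !ffunE /=.
case: ifP => _ /=; last by rewrite -[RHS]/(a * 0 + 0 : R) mulr0 addr0.
rewrite scaler_sumr -big_split /=; apply: eq_bigr => g _.
rewrite !ffunE /= mulrDr; congr (_ + _).
by rewrite /GRing.scale /= mulrCA.
Qed.

Definition dlin (k : nat) : 'End(cochains) := linfun (dfun k).

(* cocycles, coboundaries, cohomology (as a complement of B^k in Z^k,
   i.e. a subspace canonically isomorphic to Z^k/B^k) *)
Definition Zk (k : nat) : {vspace cochains} := (Cvs k :&: lker (dlin k))%VS.
Definition Bk (k : nat) : {vspace cochains} :=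
  match k with 0 => 0%VS | k'.+1 => (dlin k' @: Cvs k')%VS end.
Definition Hk (k : nat) : {vspace cochains} := (Zk k :\: Bk k)%VS.

End Dowker.

(* Main.v *)
Require Import Defs.
From HB Require Import structures.
From mathcomp Require Import all_boot all_order all_algebra zify.
Import Order.TTheory GRing.Theory Num.Theory.
Local Open Scope ring_scope.
Set Implicit Arguments. Unset Strict Implicit. Unset Printing Implicit Defensive.

Section Proofs.
Variables (R : fieldType) (G M : finType) (I : G -> M -> bool).
Local Notation cochains := {ffun cell G M -> R^o}.

HB.instance Definition _ k := GRing.isLinear.Build R cochains cochains *:%R
  (dfun (R:=R) I k) (dfun_is_linear I k).

Lemma dlinE k f : dlin R I k f = dfun I k f.
Proof. by rewrite lfunE. Qed.

Definition proj_out k (f : cochains) : cochains :=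
  [ffun p => if cidx I k p then 0 else f p].

Lemma proj_out_linear k : linear (proj_out k).
Proof.
move=> a f h; apply/ffunP => p; rewrite !ffunE /=.
case: ifP => _ /=; last by [].
by rewrite ?scaler0 ?mulr0 ?addr0.
Qed.

HB.instance Definition _ k := GRing.isLinear.Build R cochains cochains *:%R
  (proj_out k) (proj_out_linear k).

Lemma memCvs k (f : cochains) : reflect (forall p, ~~ cidx I k p -> f p = 0) (f \in Cvs R I k).
Proof.
apply: (iffP idP) => [fC p np | H].
  have : (Cvs R I k <= lker (linfun (proj_out k)))%VS.
    apply/span_subvP => e /mapP [q]; rewrite mem_enum => cq ->.
    rewrite memv_ker lfunE; apply/eqP/ffunP => p'; rewrite !ffunE.
    case: ifP => // cp'; case: eqP => // ep; by rewrite -ep -topredE /= cp' in cq.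
  move=> /subvP sub; move: (sub _ fC); rewrite memv_ker lfunE => /eqP/ffunP/(_ p).
  by rewrite !ffunE (negbTE np).
have -> : f = \sum_(q <- enum (cidx I k)) f q *: ([ffun q' : cell G M => ((q' == q)%:R : R^o)] : cochains).
  apply/ffunP => p; rewrite sum_ffunE.
  under eq_bigr do rewrite !ffunE.
  rewrite big_filter.
  case cp: (cidx I k p).
    rewrite (bigD1 p) //= eqxx big1 ?addr0; first by rewrite /GRing.scale /= mulr1.
    by move=> q /andP[_ /negbTE nq]; rewrite eq_sym nq /GRing.scale /= mulr0.
  rewrite H ?cp // big1 // => q cq; case: eqP => [e|].
    by move: cp cq; rewrite -e -[mem (cidx I k) p]/(cidx I k p) => ->.
  by rewrite /= scaler0.
rewrite big_seq; apply: memv_suml => q qin; apply: memvZ; apply: memv_span.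
exact: map_f.
Qed.


Lemma opos_U1 (x y : G) (t : {set G}) : x \notin t ->
  opos (x |: t) y = (opos t y + (enum_rank x < enum_rank y))%N.
Proof.
move=> xt; rewrite /opos.
case xy: (enum_rank x < enum_rank y)%N.
  have -> : [set h in x |: t | (enum_rank h < enum_rank y)%N] =
            x |: [set h in t | (enum_rank h < enum_rank y)%N].
    apply/setP => h; rewrite !inE; case: (h =P x) => [->|] //=.
  by rewrite cardsU1 inE (negbTE xt) addnC.
have -> : [set h in x |: t | (enum_rank h < enum_rank y)%N] =
          [set h in t | (enum_rank h < enum_rank y)%N].
  apply/setP => h; rewrite !inE; case: (h =P x) => [->|] //=.
  by rewrite (negbTE xt) xy.
by rewrite addn0.
Qed.

Lemma rank_sum (x y : G) : x != y ->
  ((enum_rank x < enum_rank y) + (enum_rank y < enum_rank x) = 1)%N.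
Proof.
move=> xy; have : enum_rank x != enum_rank y.
  by apply: contra xy => /eqP/enum_rank_inj ->.
rewrite neq_ltn; case: ltngtP => //.
Qed.

Lemma cidxE k (s : {set G}) (m : M) :
  cidx I k (s, m) = (#|s| == k.+1) && [forall g in s, I g m].
Proof.
rewrite /cidx /simplex /= /intentS inE.
case: (#|s| =P k.+1) => hs; last by rewrite !andbF.
case fa: [forall g in s, I g m]; rewrite ?andbF //= !andbT.
apply/andP; split; first by rewrite -card_gt0 hs.
by apply/set0Pn; exists m; rewrite inE.
Qed.

Definition hom (v : M -> G) k (f : cochains) : cochains :=
  [ffun p : cell G M => if cidx I k p then
     (if v p.2 \in p.1 then 0 else
        (-1) ^+ opos (v p.2 |: p.1) (v p.2) * f (v p.2 |: p.1, p.2)) else 0].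

Lemma hom_in v k f : hom v k f \in Cvs R I k.
Proof. by apply/memCvs => p np; rewrite ffunE (negbTE np). Qed.

Lemma sign_sq n : (-1) ^+ n * (-1) ^+ n = 1 :> R.
Proof. by rewrite -expr2 sqrr_sign. Qed.

Lemma sign_swap (a b X Y : nat) : (X + Y + 1 = a + b)%N ->
  (-1) ^+ X * (-1) ^+ Y = - ((-1) ^+ a * (-1) ^+ b) :> R.
Proof.
by move=> e; rewrite -!exprD -e addn1 exprSr mulrN1 opprK.
Qed.

Lemma homotopy v k (f : cochains) : (forall m, I (v m) m) ->
  f \in Cvs R I k.+1 -> dfun I k.+1 f = 0 -> dfun I k (hom v k f) = f.
Proof.
move=> hv /memCvs fC df; apply/ffunP => [[t m]].
rewrite ffunE /=.
case ct: (cidx I k.+1 (t, m)); last by rewrite fC ?ct.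
move: (ct); rewrite cidxE => /andP [/eqP ht /forallP ft].
have ctg g : g \in t -> cidx I k (t :\ g, m).
  move=> gt; rewrite cidxE; apply/andP; split.
    by move: ht; rewrite (cardsD1 g) gt add1n => -[->].
  apply/forall_inP => h; rewrite inE => /andP [_ ht'].
  exact: (implyP (ft h)).
rewrite (eq_bigr (fun g => (-1) ^+ opos t g *
   (if v m \in t :\ g then 0 else (-1) ^+ opos (v m |: (t :\ g)) (v m) *
      f (v m |: (t :\ g), m)))); last first.
  by move=> g gt; rewrite ffunE /= ctg.
case vt: (v m \in t).
  rewrite (bigD1 (v m)) //= big1 ?addr0.
    by rewrite setD1K // !inE eqxx /= mulrA sign_sq mul1r.
  by move=> g /andP [gt gv]; rewrite !inE eq_sym gv vt /= mulr0.
have := congr1 (fun F : cochains => F (v m |: t, m)) df.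
rewrite !ffunE.
have -> : cidx I k.+2 (v m |: t, m).
  rewrite cidxE cardsU1 vt ht eqxx; apply/forall_inP => h.
  by rewrite !inE => /orP [/eqP -> // | ht']; exact: (implyP (ft h)).
rewrite -[(v m |: t, m).1]/(v m |: t) -[(v m |: t, m).2]/m big_setU1 ?vt // setU1K ?vt //.
set a := opos (v m |: t) (v m).
move=> H0.
have : (-1) ^+ a * f (t, m) + \sum_(i in t) ((-1) ^+ opos (v m |: t) i * f ((v m |: t) :\ i, m)) = 0 := H0.
move/eqP; rewrite addr_eq0 => /eqP cyc.
have cyc' : \sum_(i in t) ((-1) ^+ opos (v m |: t) i * f ((v m |: t) :\ i, m)) = - ((-1) ^+ a * f (t, m)) by rewrite cyc opprK.
have -> : \sum_(g in t) (-1) ^+ opos t g *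
    (if v m \in t :\ g then 0 else (-1) ^+ opos (v m |: (t :\ g)) (v m) *
      f (v m |: (t :\ g), m))
  = \sum_(g in t) - (-1) ^+ a * ((-1) ^+ opos (v m |: t) g * f ((v m |: t) :\ g, m)).
  apply: eq_bigr => g gt.
  have gv : g != v m by apply: contraTneq gt => ->; rewrite vt.
  have -> : (v m \in t :\ g) = false by rewrite !inE vt andbF.
  have eU : v m |: (t :\ g) = (v m |: t) :\ g.
    have vg : (v m == g) = false by apply/negbTE; rewrite eq_sym.
    by apply/setP => h; rewrite !inE; case: (h =P v m) => [->|_]; rewrite ?eqxx ?vg.
  rewrite eU mulrA mulrA mulNr; congr (_ * _).
  apply: sign_swap.
  have gnot : g \notin (v m |: t) :\ g by rewrite !inE eqxx.
  have e1 : a = (opos ((v m |: t) :\ g) (v m) + (enum_rank g < enum_rank (v m)))%N.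
    by rewrite /a -opos_U1 // setD1K // !inE gt orbT.
  have vt' : v m \notin t by rewrite vt.
  have e2 := opos_U1 g vt'.
  rewrite e1 e2 -(rank_sum gv).
  move: (opos t g) (opos _ (v m)) (enum_rank g < enum_rank (v m))%N (enum_rank (v m) < enum_rank g)%N => x y b c.
  lia.
rewrite -mulr_sumr cyc' mulrN mulNr opprK mulrA sign_sq mul1r //.
Qed.

Lemma opos1 (a y : G) : opos [set a] y = (enum_rank a < enum_rank y)%N.
Proof.
rewrite -[[set a]]setU0 opos_U1 ?inE //.
have -> : opos set0 y = 0%N.
  by rewrite /opos; apply/eqP; rewrite cards_eq0; apply/eqP/setP => h; rewrite !inE.
by [].
Qed.

Lemma pair_sum (a b : G) (F : G -> R) : a != b ->
  \sum_(g in [set a; b]) (-1) ^+ opos [set a; b] g * F g =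
  (-1) ^+ (opos [set a; b] a) * (F a - F b).
Proof.
move=> ab; have anb : a \notin [set b] by rewrite inE.
rewrite big_setU1 // big_set1 /= !opos_U1 // !opos1 !ltnn addn0.
have := rank_sum ab.
case: (enum_rank a < enum_rank b)%N; case: (enum_rank b < enum_rank a)%N => // _;
  rewrite ?expr0 ?expr1 ?mul1r ?mulN1r ?mulrN1 ?opprB ?add0n.
  by [].
by rewrite addrC.
Qed.

Definition Phi (c : {ffun M -> R^o}) : cochains :=
  [ffun p : cell G M => if cidx I 0 p then c p.2 else 0].

Lemma Phi_linear : linear Phi.
Proof.
move=> a f h; apply/ffunP => p; rewrite !ffunE.
case: ifP => _; last by rewrite ?scaler0 ?mulr0 ?addr0.
by [].
Qed.

HB.instance Definition _ := GRing.isLinear.Build R {ffun M -> R^o} cochains *:%R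
  Phi Phi_linear.

Lemma cidx0_single (g : G) (m : M) : I g m -> cidx I 0 ([set g], m).
Proof.
move=> gm; rewrite cidxE cards1 eqxx; apply/forall_inP => h.
by rewrite inE => /eqP ->.
Qed.

Lemma dim_Z0 (v : M -> G) : (forall m, I (v m) m) ->
  \dim (Zk R I 0) = #|M|.
Proof.
move=> hv.
have Pinj : lker (linfun Phi) == 0%VS.
  apply/lker0P => c1 c2; rewrite !lfunE => e; apply/ffunP => m.
  have := congr1 (fun F : cochains => F ([set v m], m)) e.
  by rewrite !ffunE cidx0_single.
have -> : Zk R I 0 = (linfun Phi @: fullv)%VS.
  apply/vspaceP => f; apply/idP/idP.
    rewrite memv_cap => /andP [/memCvs fC]; rewrite memv_ker dlinE => /eqP df.
    have -> : f = linfun Phi [ffun m => f ([set v m], m)].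
      apply/ffunP => [[s m]]; rewrite lfunE !ffunE.
      case cs: (cidx I 0 (s, m)); last by rewrite fC ?cs.
      move: cs; rewrite cidxE => /andP [/cards1P [g ->] /forall_inP fs].
      have gm : I g m by apply: fs; rewrite inE.
      rewrite [(_, _).2]/=.
      case: (g =P v m) => [-> // | /eqP gv].
      have := congr1 (fun F : cochains => F ([set g; v m], m)) df.
      rewrite !ffunE.
      have -> : cidx I 1 ([set g; v m], m).
        rewrite cidxE cards2 gv eqxx; apply/forall_inP => h.
        by rewrite !inE => /orP [] /eqP ->.
      rewrite -[([set g; v m], m).1]/([set g; v m]) -[([set g; v m], m).2]/m.
      rewrite pair_sum //.
      move/eqP; rewrite mulf_eq0 signr_eq0 orFb subr_eq0 => /eqP.
      have -> : [set g; v m] :\ g = [set v m].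
        by rewrite setU1K // inE.
      have -> : [set g; v m] :\ v m = [set g].
        apply/setP => h; rewrite !inE; case: (h =P v m) => [->|] //=.
        by rewrite eq_sym (negbTE gv). by move=> _; rewrite orbF.
      by move=> ->.
    exact: memv_img (memvf _).
  move=> /memv_imgP [c _ ->]; rewrite memv_cap; apply/andP; split.
    by apply/memCvs => p np; rewrite lfunE ffunE (negbTE np).
  rewrite memv_ker dlinE; apply/eqP/ffunP => [[t m]]; rewrite !ffunE.
  case ct: (cidx I 1 (t, m)); last by [].
  move: (ct); rewrite cidxE => /andP [/cards2P [a [b [ab ->]]] /forall_inP ft].
  rewrite -[([set a; b], m).1]/([set a; b]) -[([set a; b], m).2]/m.
  rewrite (eq_bigr (fun g => (-1) ^+ opos [set a; b] g * c m)); last first.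
    move=> g gt; rewrite lfunE ffunE.
    have -> : cidx I 0 ([set a; b] :\ g, m).
      rewrite cidxE; apply/andP; split.
        by have := cardsD1 g [set a; b]; rewrite cards2 ab gt add1n => -[<-].
      by apply/forall_inP => h; rewrite inE => /andP [_ /ft].
    by [].
  by rewrite pair_sum // subrr mulr0.
rewrite limg_dim_eq; last by rewrite (eqP Pinj) capv0.
by rewrite dimvf /dim /= muln1.
Qed.

End Proofs.

Theorem mainTheorem4 (R : realFieldType) (G M : finType) (I : G -> M -> bool) :
  total_context I ->
  [/\ \dim (Hk R I 0) = (\sum_(s : {set G} | simplex I s) #|Mhat I s|)%N,
      \dim (Hk R I 0) = #|M|
    & forall k : nat, (0 < k)%N -> Hk R I k = 0%VS].
Proof.
move=> [tot1 tot2].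
pose v m := xchoose (tot2 m).
have hv : forall m, I (v m) m := fun m => xchooseP (tot2 m).
have H0 : Hk R I 0 = Zk R I 0.
  by rewrite /Hk /Bk; have := addv_diff_cap (Zk R I 0) 0; rewrite capv0 addv0.
have dH : \dim (Hk R I 0) = #|M| by rewrite H0 (@dim_Z0 R _ _ _ _ hv).
have sumE : (\sum_(s : {set G} | simplex I s) #|Mhat I s|)%N = #|M|.
  rewrite -sum1_card (partition_big (extent I) (simplex I)) /=.
    apply: eq_bigr => s _; rewrite -sum1_card; apply: eq_bigl => m.
    by rewrite /Mhat inE.
  move=> m _; rewrite /simplex; apply/andP; split.
    by case: (tot2 m) => g gm; apply/set0Pn; exists g; rewrite inE.
  by apply/set0Pn; exists m; rewrite inE; apply/forall_inP => g; rewrite inE.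
split; [by rewrite dH sumE | exact: dH |].
case=> // k _; apply/eqP; rewrite diffv_eq0; apply/subvP => f.
rewrite memv_cap => /andP [fC]; rewrite memv_ker dlinE => /eqP df.
rewrite -(@homotopy R _ _ _ _ _ _ hv fC df) -dlinE; exact: memv_img (@hom_in R _ _ _ v k f).
Qed.
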